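(* Let $m\in\mathbb{N}$ and $w>0$, and let $(n_k)_{k=1}^\infty$ be the increasing sequence of all $n\in\mathbb{N}$ with $(\varphi\circ\eta_w)(n)=m$. Then $(n_k)_{k=1}^\infty$ is a completely deterministic sequence.
   Context: $\mathbb{N}=\{1,2,\ldots\}$. Define $L_w(1):=1$ and $L_w(n):=\lceil w(L_w(1)+\cdots+L_w(n-1))\rceil$ for $n\ge2$. Let $\beta_n:=\max\{k: k(k+1)/2\le n\}$, $\varphi(n):=n-\beta_n(\beta_n+1)/2$, and $\eta_w(n):=\max\{k:\sum_{j=1}^k L_w(j)\le n\}$. The indicator sequence of an increasing sequence $(n_k)\subset\mathbb{N}$ is $(\omega_n)_{n\ge1}\in\{0,1\}^{\mathbb{N}}$ with $\omega_n=1$ iff $n=n_k$ for some $k$. A binary sequence $(\omega_n)$ is completely deterministic if for every $\varepsilon>0$ there is $K\in\mathbb{N}$ such that, after removing from $(\omega_n)$ a set of positions of density less than $\varepsilon$, what remains can be covered by $K$-blocks (words of length $K$) taken from a collection $\mathcal{C}$ with $|\mathcal{C}|<2^{\varepsilon K}$. An increasing sequence of positive integers is completely deterministic if its indicator sequence is. *)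

(* Defs.v *)
From Stdlib Require Import Reals ZArith.
From mathcomp Require Import all_boot.

Set Implicit Arguments.
Unset Strict Implicit.
Unset Printing Implicit Defensive.

Definition ceilZ (x : R) : Z := (- Int_part (- x))%Z.

(* psumL w n = L_w(1) + ... + L_w(n), computed by the recursion
   L_w(1) = 1, L_w(n+1) = ceil (w * (L_w(1)+...+L_w(n))) for n >= 1. *)
Fixpoint psumL (w : R) (n : nat) : nat :=
  match n with
  | 0 => 0
  | n'.+1 => psumL w n' + (if n' is 0 then 1 else Z.to_nat (ceilZ (w * INR (psumL w n'))))
  end.

(* L_w(n) for n >= 1 (L_w(0) := 0 is an unused junk value):
   L_w(1) = 1 and L_w(n) = ceil (w * (L_w(1)+...+L_w(n-1))) for n >= 2.
   By construction psumL w n = \sum_(1 <= j < n.+1) Lw w j. *)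
Definition Lw (w : R) (n : nat) : nat :=
  match n with
  | 0 => 0
  | 1 => 1
  | n'.+1 => Z.to_nat (ceilZ (w * INR (psumL w n')))
  end.

(* beta_n = max { k : k(k+1)/2 <= n }  (any such k satisfies k <= n). *)
Definition beta (n : nat) : nat :=
  \max_(k < n.+1 | (k * (k + 1)) %/ 2 <= n) k.

Definition phi (n : nat) : nat := n - (beta n * (beta n + 1)) %/ 2.

(* eta_w(n) = max { k : L_w(1)+...+L_w(k) <= n }  (since L_w(j) >= 1 for
   w > 0, any such k satisfies k <= n). *)
Definition eta (w : R) (n : nat) : nat :=
  \max_(k < n.+1 | \sum_(1 <= j < k.+1) Lw w j <= n) k.

(* The set S of positions (in N = {1,2,...}) not covered by the blocks
   [a, a+K) with a in [starts]: n is covered iff n - i is a start for some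
   0 <= i < K with i < n. *)
Definition covered (K : nat) (starts : nat -> bool) (n : nat) : bool :=
  [exists i : 'I_K, (i < n) && starts (n - i)].

(* Upper density of the positions n >= 1 with [~~ P n] is < eps:
   there is delta < eps with #{1 <= n <= N : ~~ P n} <= delta * N for all
   large N. *)
Definition upper_density_lt (S : nat -> bool) (eps : R) : Prop :=
  exists delta : R, (Rlt delta eps) /\
    exists N0 : nat, forall N : nat, N0 <= N ->
      Rle (INR (count S (iota 1 N))) (Rmult delta (INR N)).

(* Completely deterministic binary sequence (omega_n)_{n >= 1}
   (the value omega 0 is ignored): for every eps > 0 there is K >= 1, a
   collection C of K-words with |C| < 2^(eps K), and pairwise disjoint
   K-blocks [a, a+K) (a >= 1) each of which reads a word of C, such that the
   set of uncovered positions has (upper) density < eps. *)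
Definition completely_deterministic (omega : nat -> bool) : Prop :=
  forall eps : R, Rlt 0 eps ->
  exists K : nat, 0 < K /\
  exists (C : {set K.-tuple bool}) (starts : nat -> bool),
    Rlt (INR #|C|) (Rpower 2 (Rmult eps (INR K))) /\
    (forall a, starts a -> 0 < a) /\
    (forall a b, starts a -> starts b -> a < b -> a + K <= b) /\
    (forall a, starts a -> [tuple omega (a + i) | i < K] \in C) /\
    upper_density_lt (fun n => ~~ covered K starts n) eps.

(* Main.v *)
Require Import Defs.
From Stdlib Require Import Reals.
From mathcomp Require Import all_boot.
From Stdlib Require Import Lra Lia Classical ZArith.
From mathcomp Require Import zify.

Lemma ceil_ge (x : R) : Rle x (IZR (ceilZ x)).
Proof. rewrite /ceilZ opp_IZR. have [h1 h2] := base_Int_part (Ropp x). lra. Qed.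

Lemma step_ge (w : R) (M s : nat) : Rle (INR M) (Rmult w (INR s)) -> M <= Z.to_nat (ceilZ (Rmult w (INR s))).
Proof.
move=> h. have h2 := ceil_ge (Rmult w (INR s)).
have h3 : Rle (IZR (Z.of_nat M)) (IZR (ceilZ (Rmult w (INR s)))) by rewrite -INR_IZR_INZ; lra.
apply le_IZR in h3. lia.
Qed.

Lemma step_pos (w : R) (s : nat) : Rlt 0 w -> 0 < s -> 0 < Z.to_nat (ceilZ (Rmult w (INR s))).
Proof.
move=> hw hs. have h2 := ceil_ge (Rmult w (INR s)).
have h0 : Rlt 0 (INR s) by apply: lt_0_INR; apply/ltP.
have h3 : Rlt (IZR 0) (IZR (ceilZ (Rmult w (INR s)))) by have := Rmult_lt_0_compat _ _ hw h0; lra.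
apply lt_IZR in h3. lia.
Qed.

Lemma psum_succ w k : psumL w k.+1 = psumL w k + Lw w k.+1.
Proof. by case: k. Qed.

Lemma Lw_succ w j : 0 < j -> Lw w j.+1 = Z.to_nat (ceilZ (Rmult w (INR (psumL w j)))).
Proof. by case: j. Qed.

Lemma psum_ge w k : Rlt 0 w -> k <= psumL w k.
Proof.
move=> hw; elim: k => [|k IH] //.
rewrite psum_succ. case: k IH => [|k] IH; first by [].
rewrite Lw_succ //. have := step_pos w (psumL w k.+1) hw (leq_trans (ltn0Sn k) IH). lia.
Qed.

Lemma psum_lt w k : Rlt 0 w -> psumL w k < psumL w k.+1.
Proof.
move=> hw; rewrite psum_succ. case: k => [|k]; first by [].
rewrite Lw_succ //. have := step_pos w (psumL w k.+1) hw (leq_trans (ltn0Sn k) (psum_ge w k.+1 hw)). lia.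
Qed.

Lemma psum_mono w i j : Rlt 0 w -> i <= j -> psumL w i <= psumL w j.
Proof.
move=> hw /subnK <-; elim: (j - i) => [|d IH] //.
rewrite addSn. exact: leq_trans IH (ltnW (psum_lt w _ hw)).
Qed.

Lemma psum_strict w i j : Rlt 0 w -> i < j -> psumL w i < psumL w j.
Proof. move=> hw hij. exact: leq_trans (psum_lt w i hw) (psum_mono w _ _ hw hij). Qed.

Lemma sumL w k : \sum_(1 <= j < k.+1) Lw w j = psumL w k.
Proof.
elim: k => [|k IH]; first by rewrite big_geq.
by rewrite big_nat_recr // IH psum_succ.
Qed.

Lemma eta_eq w n k : Rlt 0 w -> psumL w k <= n -> n < psumL w k.+1 -> eta w n = k.
Proof.
move=> hw h1 h2. apply/eqP; rewrite eqn_leq; apply/andP; split.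
- apply/bigmax_leqP => i; rewrite sumL => Hi.
  rewrite leqNgt; apply/negP => hki.
  have := psum_mono w _ _ hw hki. lia.
- have hk : k < n.+1 by have := psum_ge w k hw; lia.
  have Pk : \sum_(1 <= j < (Ordinal hk).+1) Lw w j <= n by rewrite sumL.
  rewrite /eta; apply: (@leq_bigmax_cond _ (fun i : 'I_n.+1 => \sum_(1 <= j < i.+1) Lw w j <= n) (fun i => nat_of_ord i) (Ordinal hk)); exact: Pk.
Qed.

Lemma eta_ex w n : Rlt 0 w -> exists k, psumL w k <= n < psumL w k.+1.
Proof.
move=> hw; elim: n => [|n [k /andP [h1 h2]]]; first by exists 0.
case h: (n.+1 < psumL w k.+1).
- exists k; rewrite h andbT; lia.
- exists k.+1. have := psum_lt w k.+1 hw. move: h. lia.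
Qed.

Lemma eta_step w n : Rlt 0 w -> (forall j, psumL w j <> n.+1) -> eta w n.+1 = eta w n.
Proof.
move=> hw hj. have [k /andP [h1 h2]] := eta_ex w n hw.
have h3 : n.+1 < psumL w k.+1 by have := hj k.+1; lia.
rewrite (eta_eq w n k hw h1 h2). apply: (eta_eq w n.+1 k hw _ h3). lia.
Qed.

Lemma psum_big w M k0 : Rlt 0 w -> 0 < k0 -> Rle (INR M) (Rmult w (INR k0)) ->
  forall d, d * M <= psumL w (k0 + d).
Proof.
move=> hw hk0 hM; elim=> [|d IH]; first by rewrite mul0n.
rewrite addnS psum_succ Lw_succ; last lia.
have : M <= Z.to_nat (ceilZ (Rmult w (INR (psumL w (k0 + d))))).
  apply: step_ge. apply: Rle_trans hM _. apply: Rmult_le_compat_l; first lra.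
  apply: le_INR; apply/leP. exact: leq_trans (leq_addr d k0) (psum_ge w _ hw).
rewrite mulSn. lia.
Qed.

Lemma psum_bound w M k0 X k : Rlt 0 w -> 0 < k0 -> 0 < M -> Rle (INR M) (Rmult w (INR k0)) ->
  psumL w k < X -> k < k0 + X %/ M + 1.
Proof.
move=> hw hk0 hM hMk hX.
have hq : k0 <= k -> k - k0 <= X %/ M.
  move=> hk. have := psum_big w M k0 hw hk0 hMk (k - k0). rewrite subnKC // => h.
  rewrite leq_divRL //; lia.
move: hq; move: (X %/ M) => q; lia.
Qed.

Lemma count_interval (P : pred nat) s lo len : uniq s ->
  (forall x, x \in s -> P x -> lo <= x < lo + len) -> count P s <= len.
Proof.
move=> us h. rewrite -size_filter -[X in _ <= X](size_iota lo).
apply: uniq_leq_size; first exact: filter_uniq.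
move=> x; rewrite mem_filter => /andP [px xs]. rewrite mem_iota. exact: h.
Qed.

Lemma count_cover (a : pred nat) (b : nat -> pred nat) B s :
  (forall x, x \in s -> a x -> exists k, k < B /\ b k x) ->
  count a s <= \sum_(k < B) count (b k) s.
Proof.
elim: s => [|x s IH] h //=.
rewrite (eq_bigr (fun k : 'I_B => b k x + count (b k) s)) // big_split /=.
apply: leq_add; last by apply: IH => y ys; apply: h; rewrite in_cons ys orbT.
case ax: (a x) => //.
have [k [hk bk]] := h x (mem_head _ _) ax.
by rewrite (bigD1 (Ordinal hk)) //= bk.
Qed.

Lemma sum_le_const B (f : nat -> nat) c : (forall k, f k <= c) -> \sum_(k < B) f k <= B * c.
Proof.
move=> h. apply: leq_trans (_ : \sum_(k < B) c <= _).
  by apply: leq_sum => i _.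
by rewrite sum_nat_const card_ord.
Qed.

Lemma mod_disj K a b : 0 < K -> a %% K = b %% K -> a < b -> a + K <= b.
Proof.
move=> hK hab hlt.
have ea := divn_eq a K; have eb := divn_eq b K.
move: ea eb hab hlt; move: (a %/ K) (b %/ K) (a %% K) (b %% K) => qa qb ra rb ea eb hab hlt.
have : qa * K < qb * K by lia.
rewrite ltn_pmul2r // => hq.
have : qa.+1 * K <= qb * K by rewrite leq_pmul2r.
rewrite mulSn; lia.
Qed.

Lemma om_step w m n : Rlt 0 w -> 0 < n -> (forall j, psumL w j <> n.+1) ->
  ((0 < n.+1) && (phi (eta w n.+1) == m)) = ((0 < n) && (phi (eta w n) == m)).
Proof. move=> hw hn hj. by rewrite (eta_step w n hw hj) hn. Qed.

Theorem lemma4 (m : nat) (w : R) :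
  0 < m -> Rlt 0 w ->
  completely_deterministic (fun n => (0 < n) && (phi (eta w n) == m)).
Proof.
move=> hm hw eps heps.
set om := (fun n => (0 < n) && (phi (eta w n) == m)).
have [N [hN hN0]] := archimed_cor1 eps heps.
have hK : 0 < N by apply/ltP.
have hNpos : Rlt 0 (INR N) by apply: lt_0_INR.
pose K := N.
pose M := 4 * K * K.
have hM : 0 < M by rewrite /M /K; lia.
have [k1 hk1] := INR_unbounded (Rdiv (INR M) w).
pose k0 := k1.+1.
have hk0 : 0 < k0 by [].
have hk0M : Rle (INR M) (Rmult w (INR k0)).
  have e : Rmult w (Rdiv (INR M) w) = INR M by field; apply: Rgt_not_eq.
  have := Rmult_lt_compat_l w _ _ hw hk1.
  rewrite /k0 S_INR e. lra.
exists K; split => //.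
pose C : {set K.-tuple bool} := [set [tuple true | _ < K]; [tuple false | _ < K]].
pose starts := fun a => (0 < a) && (a %% K == 1 %% K) && ([tuple om (a + i) | i < K] \in C).
exists C, starts.
split.
  have hc : #|C| <= 2 by rewrite cards2; case: (_ != _).
  have h2 : Rle (INR #|C|) (INR 2) by apply: le_INR; apply/leP.
  have e2 : INR 2 = Rpower 2 1 by rewrite Rpower_1 /=; lra.
  have h1 : Rlt 1 (Rmult eps (INR K)).
    have := Rmult_lt_compat_r (INR N) _ _ hNpos hN.
    rewrite Rinv_l; last by apply: Rgt_not_eq.
    rewrite /K; lra.
  apply: Rle_lt_trans h2 _. rewrite e2. apply: Rpower_lt => //; lra.
split.
  by move=> a /andP [/andP [] ].
split.
  move=> a b /andP[/andP[_ /eqP ha] _] /andP[/andP[_ /eqP hb] _] hab.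
  by apply: mod_disj => //; rewrite ha hb.
split.
  by move=> a /andP [_ ->].
exists (Rinv (INR K)). split; first by [].
exists (4 * K * K * (k0 + 1) + K) => Nn hNn.
have uncov : forall x, 0 < x -> ~~ covered K starts x ->
    exists j, (x - (x-1) %% K < psumL w j) && (psumL w j < x - (x-1) %% K + K).
  move=> x hx hU. apply: NNPP => hne. move/negP: hU; apply.
  have hr : (x - 1) %% K < K := ltn_pmod _ hK.
  have hrx : (x - 1) %% K <= x - 1 := leq_mod _ _.
  have ha : x - (x - 1) %% K = (x-1) %/ K * K + 1.
    move: (divn_eq (x-1) K) hrx hr; move: ((x-1) %/ K) ((x-1) %% K) => q r. lia.
  move: hr hrx ha hne; move: ((x-1) %% K) => r hr hrx ha hne.
  have hconst : forall i, i < K -> om (x - r + i) = om (x - r).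
    elim=> [|i IH] hi; first by rewrite addn0.
    rewrite addnS /om (om_step w m (x - r + i) hw); last first.
    - move=> j hj; apply: hne; exists j; rewrite hj; apply/andP; split; lia.
    - lia.
    exact: IH (ltnW hi).
  have htup : [tuple om (x - r + i) | i < K] = [tuple om (x - r) | _ < K].
    by apply: eq_mktuple => i; exact: hconst i (ltn_ord i).
  apply/existsP; exists (Ordinal hr) => /=.
  apply/andP; split; first lia.
  rewrite /starts htup /C in_set2.
  rewrite ha modnMDl addn1 eqxx /=.
  by case: (om _); rewrite eqxx ?orbT.
pose B := k0 + (Nn + K) %/ M + 1.
pose near := fun k n => (n < psumL w k + K) && (psumL w k < n + K).
have hcnt : count (fun n => ~~ covered K starts n) (iota 1 Nn) <= B * (2 * K).
  apply: leq_trans (@count_cover _ near B _ _) _.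
    move=> x; rewrite mem_iota => /andP [hx1 hx2] hU.
    have [j /andP [hj1 hj2]] := uncov x hx1 hU.
    have hr : (x - 1) %% K < K := ltn_pmod _ hK.
    move: hr hj1 hj2; move: ((x-1) %% K) => r hr hj1 hj2.
    exists j; split.
      apply: (psum_bound w M k0 (Nn + K) j hw hk0 hM hk0M). lia.
    rewrite /near; apply/andP; split; lia.
  apply: (sum_le_const B (fun k => count (near k) (iota 1 Nn))) => k.
  apply: (@count_interval _ _ (psumL w k + 1 - K)); first exact: iota_uniq.
  move=> x _ /andP [h1 h2]. lia.
have hnat : K * count (fun n => ~~ covered K starts n) (iota 1 Nn) <= Nn.
  apply: leq_trans (_ : K * (B * (2 * K)) <= Nn).
    by rewrite leq_mul2l hcnt orbT.
  have hq := leq_trunc_div (Nn + K) M.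
  move: hq hNn; rewrite /B /M; move: ((Nn + K) %/ (4 * K * K)) => q hq hNn.
  nia.
have hR := le_INR _ _ (elimT leP hnat).
rewrite -multE mult_INR in hR.
apply: (Rmult_le_reg_l (INR K)); first by [].
rewrite -Rmult_assoc Rinv_r; last by apply: Rgt_not_eq.
by rewrite Rmult_1_l.
Qed.
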